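(* In the acoustic setting, suppose $A<0$ on $[\rho_-,\rho_+]$, $A^2+B^2=1$ at $\rho_\pm$ and $A^2+B^2>1$ on $(\rho_-,\rho_+)$, $A(\rho)=-1$ exactly at $\rho_1<\rho_2$ in $(\rho_-,\rho_+)$ with $A<-1$ on $(\rho_1,\rho_2)$, and there is $\rho_0\in(\rho_1,\rho_2)$ with $B>0$ on $[\rho_-,\rho_0)$, $B(\rho_0)=0$, $B<0$ on $(\rho_0,\rho_+]$. Then $d\rho^+/dt>0$ on $(\rho_-,\rho_1)$ and $d\rho^+/dt<0$ on $(\rho_1,\rho_+)$ (so the $(+)$ family starts on both ergospheres $\rho=\rho_-$ and $\rho=\rho_+$), and $d\varphi^+/dt=B(\rho_1)/\rho_1>0$ at $\rho=\rho_1$. Consequently every $(+)$ trajectory in the ergoregion satisfies $\rho^+(t)\to\rho_1$ as $t\to+\infty$, approaching the horizon $\rho=\rho_1$, which is traversed counterclockwise.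
   Context: Acoustic metric in the plane with polar coordinates $(\rho,\varphi)$: Hamiltonian $H=(\tau+A\xi_\rho+B\xi_\varphi/\rho)^2-\xi_\rho^2-(\xi_\varphi/\rho)^2$, $A=A(\rho)$, $B=B(\rho)$ smooth. The ergoregion is the annulus $\rho_-<\rho<\rho_+$ where $A^2+B^2>1$. Zero-energy null geodesics are the null bicharacteristics with $\tau=0$ parametrized by $t$; the sign in $\xi_\rho=\frac{-AB\pm\sqrt{A^2+B^2-1}}{A^2-1}\,\xi_\varphi/\rho$ defines the $(\pm)$ family. With $s=\sqrt{A^2+B^2-1}$, the equations of motion in the ergoregion are $$\frac{d\rho^\pm}{dt}=\frac{A(A^2+B^2-1)\pm Bs}{A^2+B^2},\qquad \frac{d\varphi^\pm}{dt}=\frac{s\,(Bs\mp A)}{\rho\,(A^2+B^2)}.$$ A horizon of the $(\pm)$ family is a circle $\{\rho=c\}$ in the ergoregion which is a closed trajectory of that family. *)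

(* Defs.v *)
From Stdlib Require Export Reals.
Open Scope R_scope.

Definition sfun (A B : R -> R) (r : R) : R := sqrt (A r ^ 2 + B r ^ 2 - 1).

Definition drho_plus (A B : R -> R) (r : R) : R :=
  (A r * (A r ^ 2 + B r ^ 2 - 1) + B r * sfun A B r) / (A r ^ 2 + B r ^ 2).

Definition dphi_plus (A B : R -> R) (r : R) : R :=
  sfun A B r * (B r * sfun A B r - A r) / (r * (A r ^ 2 + B r ^ 2)).

(* (rho, phi) is a (+) zero-energy null geodesic at all times t with P t. *)
Definition plus_traj_on (A B : R -> R) (P : R -> Prop) (rho phi : R -> R) : Prop :=
  forall t, P t ->
    derivable_pt_lim rho t (drho_plus A B (rho t)) /\
    derivable_pt_lim phi t (dphi_plus A B (rho t)).

(* A horizon of the (+) family: a circle {rho = c} in the ergoregion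
   (rm, rp) which is a closed trajectory of that family: the constant
   radius c together with some angle function solves the (+) equations for
   all times and the angle sweeps a full turn. *)
Definition horizon_plus (A B : R -> R) (rm rp c : R) : Prop :=
  rm < c < rp /\
  exists phi : R -> R,
    plus_traj_on A B (fun _ => True) (fun _ => c) phi /\
    exists T, 0 < T /\ Rabs (phi T - phi 0) = 2 * PI.

(* Main.v *)
Require Import Defs.
From Stdlib Require Import Reals.
From Stdlib Require Import Lra Psatz Ranalysis5 Classical.
From Coquelicot Require Import Coquelicot.
Open Scope R_scope.

Lemma drho_cont (A B : R -> R) (hA : derivable A) (hB : derivable B) x :
  A x ^ 2 + B x ^ 2 - 1 > 0 -> continuity_pt (drho_plus A B) x.
Proof.
intros hx.
apply continuity_pt_filterlim. apply (ex_derive_continuous (V:=R_NormedModule)).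
unfold drho_plus, sfun.
auto_derive.
repeat split; try (apply ex_derive_Reals_1; auto); nra.
Qed.

Lemma NNPP_aux (P : Prop) : (~ P -> False) -> P.
Proof. intro h. destruct (Classical_Prop.classic P); tauto. Qed.

Lemma mono_up (g F : R -> R) :
  (forall t, 0 <= t -> derivable_pt_lim g t (F (g t))) ->
  (forall t, 0 <= t -> F (g t) >= 0) ->
  forall a b, 0 <= a <= b -> g a <= g b.
Proof.
intros hd hF a b [ha hab].
destruct (Req_dec a b) as [->|hne]; [lra|].
destruct (MVT_cor2 g (fun t => F (g t)) a b) as [c [hc1 hc2]]; [lra| |].
- intros c hc; apply hd; lra.
- assert (F (g c) >= 0) by (apply hF; lra). nra.
Qed.

Lemma conv_up (g F : R -> R) (c : R) :
 (forall t, 0 <= t -> derivable_pt_lim g t (F (g t))) ->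
 (forall t, 0 <= t -> g 0 <= g t <= c) ->
 (forall x, g 0 <= x < c -> F x > 0 /\ continuity_pt F x) ->
 (forall x, g 0 <= x <= c -> F x >= 0) ->
 forall eps, eps > 0 -> exists T, forall t, t >= T -> Rabs (g t - c) < eps.
Proof.
intros hd hr hF hF0 eps heps.
assert (hmono : forall a b, 0 <= a <= b -> g a <= g b).
{ apply (mono_up g F hd). intros t ht. apply hF0. apply hr; lra. }
set (E := fun x => exists t, 0 <= t /\ x = g t).
destruct (completeness E) as [L [hub hlub]].
{ exists c. intros x [t [ht ->]]. apply hr; lra. }
{ exists (g 0). exists 0. split; lra. }
assert (hL0 : g 0 <= L) by (apply hub; exists 0; split; lra).
assert (hLc : L <= c).
{ apply hlub. intros x [t [ht ->]]. apply hr; lra. }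
destruct (Rlt_dec (c - eps) L) as [hlt|hge].
- assert (exists t0, 0 <= t0 /\ g t0 > c - eps) as [t0 [ht0 hgt0]].
  { apply NNPP_aux; intro hn.
    assert (L <= c - eps); [|lra].
    apply hlub. intros x [t [ht ->]].
    apply Rnot_lt_le. intro hc. apply hn. exists t; split; lra. }
  exists t0. intros t ht.
  assert (g t0 <= g t) by (apply hmono; lra).
  assert (g t <= c) by (apply hr; lra).
  rewrite Rabs_left1; lra.
- exfalso.
  destruct (hF L) as [hFL hcont]; [lra|].
  unfold continuity_pt, continue_in, limit1_in, limit_in in hcont.
  destruct (hcont (F L / 2)) as [del [hdel hdelP]]; [lra|].
  simpl in hdelP. unfold R_dist in hdelP.
  assert (hFnear : forall x, Rabs (x - L) < del -> F x > F L / 2).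
  { intros x hx. destruct (Req_dec x L) as [->|hne]; [lra|].
    assert (Rabs (F x - F L) < F L / 2).
    { apply hdelP. split; [split; [exact I| auto]|exact hx]. }
    apply Rabs_def2 in H. lra. }
  assert (exists t0, 0 <= t0 /\ g t0 > L - del) as [t0 [ht0 hgt0]].
  { apply NNPP_aux; intro hn.
    assert (L <= L - del); [|lra].
    apply hlub. intros x [t [ht ->]].
    apply Rnot_lt_le. intro hc. apply hn. exists t; split; lra. }
  set (m := F L / 2).
  set (t1 := t0 + 2 * del / m).
  assert (hm : m > 0) by (unfold m; lra).
  assert (ht1 : t0 < t1).
  { unfold t1. assert (2 * del / m > 0) by (apply Rdiv_lt_0_compat; lra). lra. }
  destruct (MVT_cor2 g (fun t => F (g t)) t0 t1) as [c' [hc1 hc2]]; [lra| |].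
  { intros c0 hc0; apply hd; lra. }
  assert (g t0 <= g c') by (apply hmono; lra).
  assert (g c' <= L) by (apply hub; exists c'; split; lra).
  assert (F (g c') > m).
  { apply hFnear. rewrite Rabs_left1; lra. }
  assert (g t1 <= L) by (apply hub; exists t1; split; lra).
  assert (F (g c') * (t1 - t0) > m * (t1 - t0)) by nra.
  assert (m * (t1 - t0) = 2 * del) by (unfold t1; field; lra).
  lra.
Qed.

Lemma contA1 (A : R -> R) (hA : derivable A) x : continuity_pt (fun u => -(A u + 1)) x.
Proof.
apply continuity_pt_filterlim. apply (ex_derive_continuous (V:=R_NormedModule) (fun u => -(A u + 1))).
auto_derive. repeat split; try (apply ex_derive_Reals_1; auto).
Qed.

Theorem mainTheorem9 (A B : R -> R) (rm rp r0 r1 r2 : R)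
  (hA : derivable A) (hB : derivable B)
  (hpos : 0 < rm)
  (hord : rm < r1 /\ r1 < r0 /\ r0 < r2 /\ r2 < rp)
  (hAneg : forall r, rm <= r <= rp -> A r < 0)
  (hbm : A rm ^ 2 + B rm ^ 2 = 1)
  (hbp : A rp ^ 2 + B rp ^ 2 = 1)
  (herg : forall r, rm < r < rp -> A r ^ 2 + B r ^ 2 > 1)
  (hA1 : forall r, rm < r < rp -> (A r = -1 <-> (r = r1 \/ r = r2)))
  (hA12 : forall r, r1 < r < r2 -> A r < -1)
  (hBpos : forall r, rm <= r < r0 -> B r > 0)
  (hB0 : B r0 = 0)
  (hBneg : forall r, r0 < r <= rp -> B r < 0) :
  (forall r, rm < r < r1 -> drho_plus A B r > 0) /\
  (forall r, r1 < r < rp -> drho_plus A B r < 0) /\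
  (dphi_plus A B r1 = B r1 / r1 /\ B r1 / r1 > 0) /\
  horizon_plus A B rm rp r1 /\
  (forall rho phi : R -> R,
     plus_traj_on A B (fun t => 0 <= t) rho phi ->
     (forall t, 0 <= t -> rm < rho t < rp) ->
     forall eps, eps > 0 -> exists T, forall t, t >= T -> Rabs (rho t - r1) < eps).
Proof.
destruct hord as [o1 [o2 [o3 o4]]].
assert (HAgt : forall r, rm <= r < r1 -> A r > -1).
{ intros r hr.
  assert (hrm : A rm > -1).
  { assert (B rm > 0) by (apply hBpos; lra).
    assert (A rm < 0) by (apply hAneg; lra). nra. }
  destruct (Req_dec r rm) as [->|hne]; [exact hrm|].
  apply Rnot_le_lt; intro hle.
  destruct (Req_dec (A r) (-1)) as [he|hne2].
  { apply hA1 in he; [|lra]. lra. }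
  destruct (IVT_interv (fun u => -(A u + 1)) rm r) as [z [hz1 hz2]].
  { intros a _. apply contA1; auto. }
  { lra. }
  { lra. }
  { lra. }
  assert (z <> rm) by (intro; subst; lra).
  assert (hz : A z = -1) by lra.
  apply hA1 in hz; lra. }
assert (fpos : forall r, rm < r < r1 -> drho_plus A B r > 0).
{ intros r hr. unfold drho_plus, sfun.
  assert (ha1 : A r > -1) by (apply HAgt; lra).
  assert (ha0 : A r < 0) by (apply hAneg; lra).
  assert (hb : B r > 0) by (apply hBpos; lra).
  assert (hX : A r ^ 2 + B r ^ 2 - 1 > 0) by (assert (H:=herg r); lra).
  set (X := A r ^ 2 + B r ^ 2 - 1) in *.
  assert (hs : sqrt X * sqrt X = X) by (apply sqrt_sqrt; lra).
  assert (hs0 : sqrt X > 0) by (apply sqrt_lt_R0; lra).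
  set (s := sqrt X) in *.
  assert (hk : B r ^ 2 - (A r * s) ^ 2 > 0).
  { replace ((A r * s) ^ 2) with (A r ^ 2 * X) by (rewrite <- hs; ring).
    unfold X.
    replace (B r ^ 2 - A r ^ 2 * (A r ^ 2 + B r ^ 2 - 1)) with ((1 - A r ^ 2) * (A r ^ 2 + B r ^ 2)) by ring.
    apply Rmult_lt_0_compat; nra. }
  assert (hk2 : B r + A r * s > 0) by nra.
  apply Rdiv_lt_0_compat; [|nra].
  replace (A r * X + B r * s) with (s * (A r * s + B r)) by (rewrite <- hs; ring).
  nra. }
assert (fneg : forall r, r1 < r < rp -> drho_plus A B r < 0).
{ intros r hr. unfold drho_plus, sfun.
  assert (ha0 : A r < 0) by (apply hAneg; lra).
  assert (hX : A r ^ 2 + B r ^ 2 - 1 > 0) by (assert (H:=herg r); lra).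
  assert (hden : A r ^ 2 + B r ^ 2 > 0) by lra.
  set (X := A r ^ 2 + B r ^ 2 - 1) in *.
  assert (hs : sqrt X * sqrt X = X) by (apply sqrt_sqrt; lra).
  assert (hs0 : sqrt X > 0) by (apply sqrt_lt_R0; lra).
  set (s := sqrt X) in *.
  assert (hk2 : A r * s + B r < 0).
  { destruct (total_order_T r r0) as [[hl|he]|hg].
    - assert (ha : A r < -1) by (apply hA12; lra).
      assert (hb : B r > 0) by (apply hBpos; lra).
      assert (hk : (A r * s) ^ 2 - B r ^ 2 > 0).
      { replace ((A r * s) ^ 2) with (A r ^ 2 * X) by (rewrite <- hs; ring).
        unfold X.
        replace (A r ^ 2 * (A r ^ 2 + B r ^ 2 - 1) - B r ^ 2) with ((A r ^ 2 - 1) * (A r ^ 2 + B r ^ 2)) by ring.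
        apply Rmult_lt_0_compat; nra. }
      assert (has : A r * s < 0) by nra.
      destruct (Rlt_or_le (A r * s + B r) 0) as [hlt|hle]; [exact hlt|].
      assert ((B r - - (A r * s)) * (B r + - (A r * s)) >= 0) by (apply Rle_ge; apply Rmult_le_pos; lra).
      nra.
    - subst. rewrite hB0. nra.
    - assert (hb : B r < 0) by (apply hBneg; lra). nra. }
  replace (A r * X + B r * s) with (s * (A r * s + B r)) by (rewrite <- hs; ring).
  unfold Rdiv. assert (hi : / (A r ^ 2 + B r ^ 2) > 0) by (apply Rinv_0_lt_compat; lra).
  assert (hn : s * (A r * s + B r) < 0) by nra.
  replace 0 with (0 * / (A r ^ 2 + B r ^ 2)) by ring.
  apply Rmult_lt_compat_r; assumption. }
assert (hAr1 : A r1 = -1) by (apply hA1; lra).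
assert (hBr1 : B r1 > 0) by (apply hBpos; lra).
assert (hsr1 : sfun A B r1 = B r1).
{ unfold sfun. rewrite hAr1.
  replace ((-1) ^ 2 + B r1 ^ 2 - 1) with (B r1 ^ 2) by ring.
  apply sqrt_pow2; lra. }
assert (hf1 : drho_plus A B r1 = 0).
{ unfold drho_plus. rewrite hsr1, hAr1. field. nra. }
assert (hdphi : dphi_plus A B r1 = B r1 / r1).
{ unfold dphi_plus. rewrite hsr1, hAr1. field. split; nra. }
assert (hk : B r1 / r1 > 0) by (apply Rdiv_lt_0_compat; lra).
split; [exact fpos|]. split; [exact fneg|]. split; [split; [exact hdphi|exact hk]|].
split.
{ split; [lra|]. exists (fun t => (B r1 / r1) * t). split.
  - intros t _. split.
    + rewrite hf1. exact (derivable_pt_lim_const r1 t).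
    + rewrite hdphi.
      pose proof (derivable_pt_lim_scal id (B r1 / r1) t 1 (derivable_pt_lim_id t)) as H.
      rewrite Rmult_1_r in H. exact H.
  - exists (2 * PI / (B r1 / r1)).
    assert (PI > 0) by exact PI_RGT_0.
    split; [apply Rdiv_lt_0_compat; lra|].
    replace (B r1 / r1 * (2 * PI / (B r1 / r1)) - B r1 / r1 * 0) with (2 * PI)
      by (field; lra).
    rewrite Rabs_right; lra. }
intros rho phi htraj hrange eps heps.
set (f := drho_plus A B) in *.
assert (hd : forall t, 0 <= t -> derivable_pt_lim rho t (f (rho t))).
{ intros t ht. apply (htraj t ht). }
assert (hcontrho : forall t, 0 <= t -> continuity_pt rho t).
{ intros t ht. apply derivable_continuous_pt. exists (f (rho t)). apply hd; auto. }
assert (sign : forall r, rm < r < rp -> (r - r1) * f r <= 0).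
{ intros r hr. destruct (total_order_T r r1) as [[hl|he]|hg].
  - assert (f r > 0) by (apply fpos; lra). nra.
  - subst. rewrite hf1. lra.
  - assert (f r < 0) by (apply fneg; lra). nra. }
assert (hdh : forall t, 0 <= t -> derivable_pt_lim (fun u => (rho u - r1) * (rho u - r1)) t
                 (2 * (rho t - r1) * f (rho t))).
{ intros t ht.
  pose proof (derivable_pt_lim_minus rho (fct_cte r1) t _ _ (hd t ht) (derivable_pt_lim_const r1 t)) as H1.
  pose proof (derivable_pt_lim_mult _ _ _ _ _ H1 H1) as H2.
  replace (2 * (rho t - r1) * f (rho t)) with
    ((f (rho t) - 0) * (rho t - r1) + (rho t - r1) * (f (rho t) - 0)) by ring.
  exact H2. }
assert (hnon : forall a b, 0 <= a <= b -> (rho b - r1) ^ 2 <= (rho a - r1) ^ 2).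
{ intros a b [ha hab].
  destruct (Req_dec a b) as [->|hne]; [lra|].
  destruct (MVT_cor2 (fun u => (rho u - r1) * (rho u - r1)) (fun t => 2 * (rho t - r1) * f (rho t)) a b)
    as [c [hc1 hc2]]; [lra| |].
  - intros c hc; apply hdh; lra.
  - assert ((rho c - r1) * f (rho c) <= 0) by (apply sign; apply hrange; lra).
    assert (2 * (rho c - r1) * f (rho c) * (b - a) <= 0) by nra.
    simpl. lra. }
destruct (total_order_T (rho 0) r1) as [[hl|he]|hg].
- assert (stay : forall t, 0 <= t -> rho 0 <= rho t <= r1).
  { intros t ht.
    assert (hh := hnon 0 t (conj (Rle_refl 0) ht)).
    assert (rho t <= r1).
    { apply Rnot_lt_le. intro hgt.
      assert (t <> 0) by (intro; subst; lra).
      destruct (IVT_interv (fun u => rho u - r1) 0 t) as [z [hz1 hz2]].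
      { intros a ha.
        exact (continuity_pt_minus rho (fct_cte r1) a (hcontrho a ltac:(lra))
                 (continuity_pt_const (fct_cte r1) a (fun _ _ => eq_refl))). }
      { lra. } { lra. } { lra. }
      assert (hz := hnon z t (conj (proj1 hz1) (proj2 hz1))).
      replace (rho z - r1) with 0 in hz by lra. nra. }
    split; [nra|lra]. }
  assert (h0 := hrange 0 (Rle_refl 0)).
  apply (conv_up rho f r1 hd stay); auto.
  + intros x hx. split.
    * apply fpos; lra.
    * apply drho_cont; auto. assert (H := herg x); lra.
  + intros x hx. destruct (Req_dec x r1) as [->|hne].
    * rewrite hf1; lra.
    * assert (f x > 0) by (apply fpos; lra). lra.
- exists 0. intros t ht.
  assert (ht0 : 0 <= t) by lra. assert (hh := hnon 0 t (conj (Rle_refl 0) ht0)).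
  rewrite he in hh. replace (r1 - r1) with 0 in hh by ring.
  assert (rho t = r1) by nra.
  rewrite H. replace (r1 - r1) with 0 by ring. rewrite Rabs_R0; lra.
- assert (stay : forall t, 0 <= t -> r1 <= rho t <= rho 0).
  { intros t ht.
    assert (hh := hnon 0 t (conj (Rle_refl 0) ht)).
    assert (r1 <= rho t).
    { apply Rnot_lt_le. intro hgt.
      assert (t <> 0) by (intro; subst; lra).
      destruct (IVT_interv (fun u => r1 - rho u) 0 t) as [z [hz1 hz2]].
      { intros a ha.
        exact (continuity_pt_minus (fct_cte r1) rho a
                 (continuity_pt_const (fct_cte r1) a (fun _ _ => eq_refl)) (hcontrho a ltac:(lra))). }
      { lra. } { lra. } { lra. }
      assert (hz := hnon z t (conj (proj1 hz1) (proj2 hz1))).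
      replace (rho z - r1) with 0 in hz by lra. nra. }
    split; [lra|nra]. }
  assert (h0 := hrange 0 (Rle_refl 0)).
  destruct (conv_up (fun t => - rho t) (fun x => - f (- x)) (- r1)) with (eps := eps)
    as [T HT]; auto.
  + intros t ht. cbv beta. rewrite Ropp_involutive.
    exact (derivable_pt_lim_opp _ _ _ (hd t ht)).
  + intros t ht. cbv beta. assert (H := stay t ht). lra.
  + intros x hx. cbv beta in hx. split.
    * assert (f (- x) < 0) by (apply fneg; lra). lra.
    * assert (Hf : continuity_pt f (- x)).
      { apply drho_cont; auto. assert (H := herg (- x)); lra. }
      exact (continuity_pt_opp _ x (continuity_pt_comp _ f x
               (continuity_pt_opp id x (derivable_continuous_pt _ _ (derivable_pt_id x))) Hf)).
  + intros x hx. cbv beta in hx. destruct (Req_dec x (- r1)) as [->|hne].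
    * rewrite Ropp_involutive. rewrite hf1; lra.
    * assert (f (- x) < 0) by (apply fneg; lra). lra.
  + exists T. intros t ht. assert (H := HT t ht).
    replace (- rho t - - r1) with (- (rho t - r1)) in H by ring.
    rewrite Rabs_Ropp in H. exact H.
Qed.
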